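(* Let $(\varphi_n)_{n\ge 0}$ be vectors in $\mathbb{R}^d$ and set $r_0=1$, $r_n=1+\sum_{i=1}^n\|\varphi_i\|^2$ for $n\ge1$. Define $A_n=\varphi_n\varphi_n^\top/r_n$ and the transition matrices $\Phi(i,i)=I$, $\Phi(n+1,i)=(I-A_n)\Phi(n,i)$ for $n\ge i$. Let $(t_k)_{k\ge0}$ be a strictly increasing sequence of integers with $t_0\ge 1$. Set $$S_{t_kt_{k-1}}=\sum_{i=t_{k-1}}^{t_k-1}\varphi_i\varphi_i^\top,\qquad D_k=r_{t_k-1}\left(\log r_{t_k-1}-\log r_{t_{k-1}-1}\right)+r_{t_{k-1}-1}.$$ If $\sum_{k=1}^\infty \lambda_{\min}(S_{t_kt_{k-1}})/D_k=\infty$, then $\Phi(n,0)\to0$ as $n\to\infty$.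
   Context: $\log$ is the natural logarithm, $\|\cdot\|$ the Euclidean norm, $\lambda_{\min}$ the smallest eigenvalue of a symmetric matrix. *)

(* Defs.v *)
From HB Require Import structures.
From mathcomp Require Import all_boot all_order all_algebra.
From mathcomp Require Import all_classical all_reals all_analysis.
Set Implicit Arguments. Unset Strict Implicit. Unset Printing Implicit Defensive.
Import Order.TTheory GRing.Theory Num.Theory.
Import numFieldNormedType.Exports.
Local Open Scope ring_scope.
Local Open Scope classical_set_scope.

Section Defs.
Variables (R : realType) (d : nat).

Definition sqnorm (v : 'cV[R]_d) : R := \sum_(j < d) (v j 0) ^+ 2.

Definition rr (phi : nat -> 'cV[R]_d) (n : nat) : R :=
  1 + \sum_(1 <= i < n.+1) sqnorm (phi i).

Definition AA (phi : nat -> 'cV[R]_d) (n : nat) : 'M[R]_d :=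
  (rr phi n)^-1 *: (phi n *m (phi n)^T).

(* Transition matrix Phi(n,i): Phi(i,i) = I, Phi(n+1,i) = (I - A_n) Phi(n,i)
   for n >= i (value for n < i is irrelevant; set to I). *)
Fixpoint Phi (phi : nat -> 'cV[R]_d) (n i : nat) : 'M[R]_d :=
  match n with
  | 0 => 1%:M
  | n'.+1 => if (i <= n')%N then (1%:M - AA phi n') *m Phi phi n' i else 1%:M
  end.

Definition lambda_min (S : 'M[R]_d) : R := inf [set a : R | eigenvalue S a].

(* S_{t_{k+1} t_k} = sum_{i = t_k}^{t_{k+1}-1} phi_i phi_i^T *)
Definition Sblock (phi : nat -> 'cV[R]_d) (t : nat -> nat) (k : nat) : 'M[R]_d :=
  \sum_(t k <= i < t k.+1) (phi i *m (phi i)^T).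

(* D_{k+1} = r_{t_{k+1}-1} (log r_{t_{k+1}-1} - log r_{t_k - 1}) + r_{t_k - 1} *)
Definition Dblock (phi : nat -> 'cV[R]_d) (t : nat -> nat) (k : nat) : R :=
  rr phi (t k.+1 - 1) * (ln (rr phi (t k.+1 - 1)) - ln (rr phi (t k - 1)))
  + rr phi (t k - 1).

End Defs.

(* Main.v *)
Require Import Defs.
From HB Require Import structures.
From mathcomp Require Import all_boot all_order all_algebra.
From mathcomp Require Import all_classical all_reals all_analysis.
From mathcomp Require Import lra ring.
Set Implicit Arguments. Unset Strict Implicit. Unset Printing Implicit Defensive.
Import Order.TTheory GRing.Theory Num.Theory.
Import numFieldNormedType.Exports.
Local Open Scope ring_scope.
Local Open Scope classical_set_scope.
Section Vec.
Variables (R : realType) (d : nat).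
Implicit Types (u v w : 'cV[R]_d).

Definition dotv u v : R := \sum_(j < d) u j 0 * v j 0.

Lemma sqnormE u : sqnorm u = dotv u u.
Proof. by apply: eq_bigr => j _; rewrite expr2. Qed.

Lemma dotvC u v : dotv u v = dotv v u.
Proof. by apply: eq_bigr => j _; rewrite mulrC. Qed.

Lemma dotvDl u v w : dotv (u + v) w = dotv u w + dotv v w.
Proof. by rewrite /dotv -big_split; apply: eq_bigr => j _; rewrite mxE mulrDl. Qed.

Lemma dotvZl a u v : dotv (a *: u) v = a * dotv u v.
Proof. by rewrite /dotv mulr_sumr; apply: eq_bigr => j _; rewrite mxE mulrA. Qed.

Lemma dotvDr u v w : dotv w (u + v) = dotv w u + dotv w v.
Proof. by rewrite dotvC dotvDl !(dotvC w). Qed.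

Lemma dotvZr a u v : dotv v (a *: u) = a * dotv v u.
Proof. by rewrite dotvC dotvZl dotvC. Qed.

Lemma sqnorm_ge0 u : 0 <= sqnorm u.
Proof. by apply: sumr_ge0 => j _; rewrite sqr_ge0. Qed.

Lemma sqnormD u v : sqnorm (u + v) = sqnorm u + 2 * dotv u v + sqnorm v.
Proof. rewrite !sqnormE !dotvDl !dotvDr (dotvC v u); ring. Qed.

Lemma sqnormZ a u : sqnorm (a *: u) = a ^+ 2 * sqnorm u.
Proof. by rewrite !sqnormE dotvZl dotvZr mulrA expr2. Qed.

Lemma coord_le_sqnorm u i : u i 0 ^+ 2 <= sqnorm u.
Proof.
rewrite /sqnorm (bigD1 i) //= lerDl; apply: sumr_ge0 => j _; exact: sqr_ge0.
Qed.

End Vec.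

Lemma quad_disc (R : realType) (a b c : R) : 0 <= c ->
  (forall s, 0 <= a + 2 * b * s + c * s ^+ 2) -> b ^+ 2 <= a * c.
Proof.
move=> c0 H; have [cp|] := ltrP 0 c.
  have := H (- b / c).
  have -> : a + 2 * b * (- b / c) + c * (- b / c) ^+ 2 = a - b ^+ 2 / c.
    by field; rewrite gt_eqF.
  rewrite subr_ge0 ler_pdivrMr //.
move=> c_le0; have c00 : c = 0 by apply/eqP; rewrite eq_le c_le0 c0.
subst c; rewrite mulr0.
have [b0|bn0] := eqVneq b 0; first by rewrite b0 expr0n.
have := H (- (a + 1) / (2 * b)).
have -> : a + 2 * b * (- (a + 1) / (2 * b)) + 0 * (- (a + 1) / (2 * b)) ^+ 2 = -1.
  by field; rewrite bn0.
by rewrite ler0N1.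
Qed.

Lemma CS (R : realType) d (u v : 'cV[R]_d) : dotv u v ^+ 2 <= sqnorm u * sqnorm v.
Proof.
apply: quad_disc; first exact: sqnorm_ge0.
move=> s; have := sqnorm_ge0 (u + s *: v).
by rewrite sqnormD sqnormZ dotvZr; lra.
Qed.
Lemma wcs_aux (R : realType) (p C W c w : R) : 0 <= C -> 0 <= W -> 0 <= c -> 0 <= w ->
  p ^+ 2 <= (C * W) * (c * w) -> 2 * p <= C * w + c * W.
Proof.
move=> C0 W0 c0 w0 h.
have h2 : (2 * p) ^+ 2 <= (C * w + c * W) ^+ 2.
  have e1 : (C * w + c * W) ^+ 2 = (C * w - c * W) ^+ 2 + 4 * ((C * W) * (c * w)) by ring.
  have e2 : (2 * p) ^+ 2 = 4 * p ^+ 2 by ring.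
  rewrite e1 e2; have := sqr_ge0 (C * w - c * W); lra.
have hp : 0 <= C * w + c * W by apply: addr_ge0; apply: mulr_ge0.
have [//|hlt] := leP (2 * p) (C * w + c * W).
have := ltr_pM hp hp hlt hlt; rewrite -!expr2 => h3.
by move: (lt_le_trans h3 h2); rewrite ltxx.
Qed.

Lemma wcs (R : realType) d (u : nat -> 'cV[R]_d) (c w : nat -> R) m :
  (forall j, 0 <= c j) -> (forall j, 0 <= w j) ->
  (forall j, sqnorm (u j) <= c j * w j) ->
  forall n, sqnorm (\sum_(m <= j < n) u j) <= (\sum_(m <= j < n) c j) * (\sum_(m <= j < n) w j).
Proof.
move=> c0 w0 h; elim=> [|n IH].
  rewrite !big_geq // mulr0 /sqnorm; apply: sumr_le0 => j _; rewrite mxE expr0n //=.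
have [mn|nm] := leqP m n; last first.
  rewrite !big_geq // mulr0 /sqnorm; apply: sumr_le0 => j _; rewrite mxE expr0n //=.
rewrite !big_nat_recr //= sqnormD.
set U := \sum_(m <= j < n) u j; set C := \sum_(m <= j < n) c j; set W := \sum_(m <= j < n) w j.
have C0 : 0 <= C by apply: sumr_ge0.
have W0 : 0 <= W by apply: sumr_ge0.
have hp := CS U (u n).
have hu := h n; have hU : sqnorm U <= C * W := IH.
have : 2 * dotv U (u n) <= C * w n + c n * W.
  apply: wcs_aux => //.
  apply: le_trans hp _; apply: ler_pM => //; exact: sqnorm_ge0.
have e : (C + c n) * (W + w n) = C * W + (C * w n + c n * W) + c n * w n by ring.
move=> hd; rewrite e. lra.
Qed.
Section Form.
Variables (R : realType) (d : nat).
Implicit Types (x y z : 'cV[R]_d) (S : 'M[R]_d).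

Definition bf S x y : R := (x^T *m S *m y) 0 0.
Definition qf S x : R := bf S x x.

Lemma bf_sym S x y : S^T = S -> bf S x y = bf S y x.
Proof.
move=> hS; rewrite /bf -[in LHS](trmxK (x^T *m S *m y)) mxE.
by rewrite !trmx_mul trmxK hS mulmxA.
Qed.

Lemma bfDl S x y z : bf S (x + y) z = bf S x z + bf S y z.
Proof. by rewrite /bf linearD /= !mulmxDl mxE. Qed.

Lemma bfZl S a x z : bf S (a *: x) z = a * bf S x z.
Proof. by rewrite /bf linearZ /= -!scalemxAl mxE. Qed.

Lemma bfDr S x y z : bf S z (x + y) = bf S z x + bf S z y.
Proof. by rewrite /bf !mulmxDr mxE. Qed.

Lemma bfZr S a x z : bf S z (a *: x) = a * bf S z x.
Proof. by rewrite /bf -!scalemxAr mxE. Qed.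

Lemma qf_expand S x y s : S^T = S ->
  qf S (x + s *: y) = qf S x + 2 * s * bf S x y + s ^+ 2 * qf S y.
Proof.
move=> hS; rewrite /qf !(bfDl, bfDr, bfZl, bfZr) (bf_sym y x hS); ring.
Qed.

Lemma CS_form S x y : S^T = S -> (forall z, 0 <= qf S z) ->
  bf S x y ^+ 2 <= qf S x * qf S y.
Proof.
move=> hS hP; apply: (quad_disc (hP y)).
by move=> s; have := hP (x + s *: y); rewrite qf_expand //; lra.
Qed.

Lemma bfE S x y : bf S x y = \sum_(j < d) \sum_(i < d) x i 0 * S i j * y j 0.
Proof.
rewrite /bf mxE; apply: eq_bigr => j _; rewrite mxE mulr_suml.
by apply: eq_bigr => i _; rewrite mxE.
Qed.

Lemma sqnorm_tr x : (x^T *m x) 0 0 = sqnorm x.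
Proof. by rewrite mxE /sqnorm; apply: eq_bigr => j _; rewrite mxE expr2. Qed.

Lemma prod_bound (a b s N : R) : a ^+ 2 <= N -> b ^+ 2 <= N -> a * s * b <= `|s| * N.
Proof.
move=> ha hb.
have h1 : a * s * b <= `|s| * (`|a| * `|b|).
  apply: le_trans (ler_norm _) _; rewrite !normrM. lra.
apply: le_trans h1 _; apply: ler_wpM2l => //.
have e1 : `|a| ^+ 2 = a ^+ 2 by rewrite real_normK ?num_real.
have e2 : `|b| ^+ 2 = b ^+ 2 by rewrite real_normK ?num_real.
have := sqr_ge0 (`|a| - `|b|); nra.
Qed.

Definition Kbound S : R := \sum_(j < d) \sum_(i < d) `|S i j|.

Lemma Kbound_ge0 S : 0 <= Kbound S.
Proof. by apply: sumr_ge0 => j _; apply: sumr_ge0 => i _. Qed.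

Lemma qf_bound S x : qf S x <= Kbound S * sqnorm x.
Proof.
rewrite /qf bfE /Kbound mulr_suml; apply: ler_sum => j _.
rewrite mulr_suml; apply: ler_sum => i _.
apply: prod_bound; exact: coord_le_sqnorm.
Qed.

Lemma sqnorm_eq0 x : sqnorm x = 0 -> x = 0.
Proof.
move=> h; apply/matrixP => i j; rewrite (ord1 j) mxE.
have := coord_le_sqnorm x i; rewrite h => h2.
have : x i 0 ^+ 2 = 0 by apply/eqP; rewrite eq_le h2 sqr_ge0.
by move/eqP; rewrite sqrf_eq0 => /eqP.
Qed.

Lemma qf_shift S M x : qf (S - M%:M) x = qf S x - M * sqnorm x.
Proof.
rewrite /qf /bf mulmxBr mulmxBl mxE [X in _ + X = _]mxE.
by rewrite mul_mx_scalar -scalemxAl [X in _ - X = _]mxE sqnorm_tr.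
Qed.

End Form.
Lemma rayleigh (R : realType) d (S : 'M[R]_d) : S^T = S -> (forall z, 0 <= qf S z) ->
  forall x, lambda_min S * sqnorm x <= qf S x.
Proof.
move=> hS hP x.
have [x0|xpos] := eqVneq (sqnorm x) 0; first by rewrite x0 mulr0 hP.
have xp : 0 < sqnorm x by rewrite lt_neqAle eq_sym xpos sqnorm_ge0.
pose E := [set mu : R | forall y, mu * sqnorm y <= qf S y].
have E0 : E 0 by move=> y; rewrite mul0r hP.
have ubE : ubound E (qf S x / sqnorm x).
  by move=> mu Emu; rewrite ler_pdivlMr //; exact: Emu.
have hasubE : has_ubound E by exists (qf S x / sqnorm x).
have neE : E !=set0 by exists 0.
pose M := sup E.
have EM : E M.
  move=> y; have [y0|ypos] := eqVneq (sqnorm y) 0; first by rewrite y0 mulr0 hP.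
  have yp : 0 < sqnorm y by rewrite lt_neqAle eq_sym ypos sqnorm_ge0.
  rewrite -ler_pdivlMr //; apply: ge_sup => // mu Emu.
  by rewrite ler_pdivlMr //; exact: Emu.
have eigM : eigenvalue S M.
  have [//|neM] := boolP (eigenvalue S M); exfalso.
  have uP : (S - M%:M) \in unitmx.
    by rewrite -row_free_unit -kermx_eq0; move: neM; rewrite /eigenvalue negbK /eigenspace.
  set P := S - M%:M in uP.
  have PT : P^T = P by rewrite /P linearB /= hS tr_scalar_mx.
  have Ppsd : forall z, 0 <= qf P z by move=> z; rewrite /P qf_shift subr_ge0; exact: EM.
  pose Q := invmx P.
  have QT : Q^T = Q by rewrite /Q trmx_inv PT.
  have PQ : P *m Q = 1%:M by rewrite /Q mulmxV.
  have Qpsd : forall z, 0 <= qf Q z.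
    move=> z; have := Ppsd (Q *m z).
    by rewrite /qf /bf trmx_mul QT -!mulmxA [P *m (Q *m z)]mulmxA PQ mul1mx.
  have key : forall z, sqnorm z <= (Kbound Q + 1) * qf P z.
    move=> z.
    have e1 : bf Q (P *m z) z = sqnorm z.
      by rewrite /bf trmx_mul PT -(mulmxA z^T P Q) PQ mulmx1 sqnorm_tr.
    have e2 : qf Q (P *m z) = qf P z.
      by rewrite /qf /bf trmx_mul PT -(mulmxA z^T P Q) PQ mulmx1 mulmxA.
    have h := CS_form (P *m z) z QT Qpsd.
    rewrite e1 e2 in h.
    have hb := qf_bound Q z.
    have K0 := Kbound_ge0 Q.
    have qP := Ppsd z.
    have [z0|zpos] := eqVneq (sqnorm z) 0; first by rewrite z0 mulr_ge0 // addr_ge0.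
    have zp : 0 < sqnorm z by rewrite lt_neqAle eq_sym zpos sqnorm_ge0.
    have h2 : sqnorm z ^+ 2 <= qf P z * (Kbound Q * sqnorm z).
      by apply: le_trans h _; apply: ler_wpM2l.
    have h3 : sqnorm z <= qf P z * Kbound Q.
      by rewrite -(ler_pM2r zp) -mulrA -expr2.
    nra.
  have eps0 : 0 < (Kbound Q + 1)^-1 by rewrite invr_gt0 ltr_wpDl // Kbound_ge0.
  have EMe : E (M + (Kbound Q + 1)^-1).
    move=> y; have := key y; have := EM y.
    rewrite /P qf_shift.
    have Kp : 0 < Kbound Q + 1 by rewrite ltr_wpDl // Kbound_ge0.
    move=> h1 h2; rewrite mulrDl.
    have : (Kbound Q + 1)^-1 * sqnorm y <= qf S y - M * sqnorm y.
      by rewrite mulrC ler_pdivrMr // mulrC.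
    lra.
  have := ub_le_sup hasubE EMe; rewrite -/M; lra.
have lbE : lbound [set a : R | eigenvalue S a] M.
  move=> a /eigenvalueP [v hv v0].
  have hx := EM v^T.
  have vp : 0 < sqnorm v^T.
    rewrite lt_neqAle sqnorm_ge0 andbT eq_sym; apply/eqP => /sqnorm_eq0 h.
    by move: v0; rewrite -(trmxK v) h linear0 eqxx.
  have : qf S v^T = a * sqnorm v^T.
    by rewrite /qf /bf trmxK hv -scalemxAl mxE -sqnorm_tr trmxK.
  move=> e; rewrite e in hx.
  by rewrite -(ler_pM2r vp).
have hl : lambda_min S <= M.
  by apply: (ge_inf _ eigM); exists M.
have := sqnorm_ge0 x.
have := EM x.
nra.
Qed.
Section Dyn.
Variables (R : realType) (d : nat) (phi : nat -> 'cV[R]_d).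

Lemma rrS n : rr phi n.+1 = rr phi n + sqnorm (phi n.+1).
Proof. by rewrite /rr big_nat_recr //= addrA. Qed.

Lemma rr_ge1 n : 1 <= rr phi n.
Proof. by rewrite /rr lerDl; apply: sumr_ge0 => i _; exact: sqnorm_ge0. Qed.

Lemma rr_gt0 n : 0 < rr phi n.
Proof. exact: lt_le_trans ltr01 (rr_ge1 n). Qed.

Lemma rr_mono m n : (m <= n)%N -> rr phi m <= rr phi n.
Proof.
move=> /subnK <-; elim: (n - m)%N => [|k IH] //=.
by rewrite addSn rrS; apply: le_trans IH _; rewrite lerDl sqnorm_ge0.
Qed.

Lemma sq_le_rr n : (1 <= n)%N -> sqnorm (phi n) <= rr phi n.
Proof.
case: n => // n _; rewrite rrS lerDr; exact: le_trans ler01 (rr_ge1 n).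
Qed.

Lemma rr_sub1 n : (1 <= n)%N -> rr phi n.-1 = rr phi n - sqnorm (phi n).
Proof. by case: n => // n _; rewrite rrS /= addrK. Qed.

Lemma mulmx_cV1 (A : 'cV[R]_d) (c : 'M[R]_1) : A *m c = c 0 0 *: A.
Proof.
apply/matrixP => i j; rewrite (ord1 j) !mxE big_ord1 mulrC; done.
Qed.

Lemma AA_mul n (v : 'cV[R]_d) :
  AA phi n *m v = (dotv (phi n) v / rr phi n) *: phi n.
Proof.
rewrite /AA -scalemxAl -mulmxA mulmx_cV1 scalerA mulrC.
congr (_ * _ *: _); rewrite mxE; apply: eq_bigr => j _; rewrite mxE //.
Qed.

Variable x : nat -> 'cV[R]_d.
Hypothesis hx : forall n, x n.+1 = (1%:M - AA phi n) *m x n.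

Let z n := dotv (phi n) (x n).
Let V n := sqnorm (x n).

Lemma x_step n : x n.+1 = x n - (z n / rr phi n) *: phi n.
Proof. by rewrite hx mulmxBl mul1mx AA_mul. Qed.

Lemma V_step n : (1 <= n)%N -> V n.+1 <= V n - z n ^+ 2 / rr phi n.
Proof.
move=> n1; rewrite /V x_step -scaleNr sqnormD sqnormZ dotvZr (dotvC (x n)) -/(z n).
have r0 := rr_gt0 n; have hs := sq_le_rr n1.
set r := rr phi n in r0 hs *; set q := sqnorm (phi n).
have h1 : (- (z n / r)) ^+ 2 * q <= (- (z n / r)) ^+ 2 * r.
  by apply: ler_wpM2l => //; exact: sqr_ge0.
have e : (- (z n / r)) ^+ 2 * r = z n ^+ 2 / r by field; rewrite gt_eqF.
have e2 : 2 * (- (z n / r) * z n) = - 2 * (z n ^+ 2 / r) by field; rewrite gt_eqF.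
rewrite e2; lra.
Qed.

Lemma e_ge0 n : 0 <= z n ^+ 2 / rr phi n.
Proof. by rewrite divr_ge0 ?sqr_ge0 // ltW // rr_gt0. Qed.

Lemma V_mono m n : (1 <= m)%N -> (m <= n)%N -> V n <= V m.
Proof.
move=> m1 /subnK <-; elim: (n - m)%N => [|k IH] //=.
rewrite addSn; apply: le_trans (V_step _) _; first by rewrite (leq_trans m1) // leq_addl.
by apply: le_trans IH; rewrite lerBlDr lerDl e_ge0.
Qed.

Lemma V_tele s i : (1 <= s)%N -> (s <= i)%N ->
  V i + \sum_(s <= j < i) z j ^+ 2 / rr phi j <= V s.
Proof.
move=> s1 /subnK <-; elim: (i - s)%N => [|k IH] /=.
  by rewrite add0n big_geq // addr0.
rewrite addSn big_nat_recr /=; last by rewrite leq_addl.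
apply: le_trans IH; have := @V_step (k + s) (leq_trans s1 (leq_addl _ _)); lra.
Qed.

Lemma diff_eq s i : (s <= i)%N ->
  x s - x i = \sum_(s <= j < i) (z j / rr phi j) *: phi j.
Proof.
move=> /subnK <-; elim: (i - s)%N => [|k IH] /=.
  by rewrite add0n big_geq // subrr.
rewrite addSn big_nat_recr /=; last by rewrite leq_addl.
by rewrite -IH x_step opprD opprK addrA.
Qed.

End Dyn.
Lemma ln_sub_le (R : realType) (a b : R) : 0 < a -> 0 < b -> ln a - ln b <= a / b - 1.
Proof.
move=> a0 b0; rewrite -ln_div ?posrE //.
have h : -1 < a / b - 1 by rewrite ltrBrDl subrr divr_gt0.
by have := le_ln1Dx h; rewrite addrC subrK.
Qed.

Lemma sum_sub (R : realType) (f : nat -> R) m i n : (forall j, 0 <= f j) ->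
  (m <= i)%N -> (i <= n)%N -> \sum_(m <= j < i) f j <= \sum_(m <= j < n) f j.
Proof.
move=> f0 mi i_n; rewrite (big_cat_nat mi i_n) /= lerDl; exact: sumr_ge0.
Qed.

Lemma qf_rank1 (R : realType) d (p y : 'cV[R]_d) : qf (p *m p^T) y = dotv p y ^+ 2.
Proof.
rewrite /qf /bf mulmxA -(mulmxA (y^T *m p) p^T y) mxE big_ord1 expr2; congr (_ * _).
  by rewrite mxE dotvC; apply: eq_bigr => j _; rewrite mxE.
by rewrite mxE; apply: eq_bigr => j _; rewrite mxE.
Qed.

Lemma qf_sum (R : realType) d (A : nat -> 'M[R]_d) m n y :
  qf (\sum_(m <= i < n) A i) y = \sum_(m <= i < n) qf (A i) y.
Proof.
rewrite /qf /bf mulmx_sumr mulmx_suml summxE; apply: eq_bigr => i _ //.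
Qed.

Section Block.
Variables (R : realType) (d : nat) (phi : nat -> 'cV[R]_d).
Variable x : nat -> 'cV[R]_d.
Hypothesis hx : forall n, x n.+1 = (1%:M - AA phi n) *m x n.

Lemma block s t : (1 <= s)%N -> (s < t)%N ->
  lambda_min (\sum_(s <= i < t) phi i *m (phi i)^T) * sqnorm (x s) <=
  4 * (rr phi (t - 1) * (ln (rr phi (t - 1)) - ln (rr phi (s - 1))) + rr phi (s - 1))
    * (sqnorm (x s) - sqnorm (x t)).
Proof.
move=> s1 st; rewrite !subn1.
set S := \sum_(s <= i < t) phi i *m (phi i)^T.
have ST : S^T = S.
  rewrite /S raddf_sum /=; apply: eq_bigr => i _; by rewrite trmx_mul trmxK.
have qfS : forall y, qf S y = \sum_(s <= i < t) dotv (phi i) y ^+ 2.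
  by move=> y; rewrite /S qf_sum; apply: eq_bigr => i _; rewrite qf_rank1.
have Spsd : forall y, 0 <= qf S y.
  by move=> y; rewrite qfS; apply: sumr_ge0 => i _; exact: sqr_ge0.
have hR := rayleigh ST Spsd (x s); rewrite qfS in hR.
set z := fun n => dotv (phi n) (x n).
set e := fun n => z n ^+ 2 / rr phi n.
set c := fun n => sqnorm (phi n) / rr phi n.
set rT := rr phi t.-1; set rS := rr phi s.-1.
set L := ln rT - ln rS.
set D := rT * L + rS.
set Dl := sqnorm (x s) - sqnorm (x t).
have rT0 : 0 < rT := rr_gt0 _ _.
have rS0 : 0 < rS := rr_gt0 _ _.
have e0 : forall j, 0 <= e j by move=> j; exact: e_ge0.
have c0 : forall j, 0 <= c j.
  by move=> j; rewrite /c divr_ge0 ?sqnorm_ge0 // ltW // rr_gt0.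
have sum_e : \sum_(s <= j < t) e j <= Dl.
  have := V_tele hx s1 (ltnW st); rewrite /Dl /e /z; lra.
have c_le : forall j, (1 <= j)%N -> c j <= ln (rr phi j) - ln (rr phi j.-1).
  move=> j j1; have := ln_sub_le (rr_gt0 phi j.-1) (rr_gt0 phi j).
  rewrite (rr_sub1 phi j1) /c.
  have -> : (rr phi j - sqnorm (phi j)) / rr phi j - 1 = - (sqnorm (phi j) / rr phi j).
    by field; rewrite gt_eqF // rr_gt0.
  rewrite -(rr_sub1 phi j1); lra.
have sum_c : \sum_(s <= j < t) c j <= L.
  apply: le_trans (_ : \sum_(s <= j < t) (ln (rr phi j.+1.-1) - ln (rr phi j.-1)) <= _).
    rewrite big_nat_cond [X in _ <= X]big_nat_cond; apply: ler_sum => j /andP [/andP [sj _] _].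
    by apply: c_le; apply: leq_trans s1 sj.
  rewrite (telescope_sumr (fun k => ln (rr phi k.-1))) //; exact: ltnW.
have L0 : 0 <= L by apply: le_trans sum_c; apply: sumr_ge0.
have Dl0 : 0 <= Dl by apply: le_trans sum_e; apply: sumr_ge0.
have sum_sq : \sum_(s <= i < t) sqnorm (phi i) <= rT.
  rewrite /rT /rr prednK; last by apply: leq_ltn_trans st.
  rewrite (big_cat_nat s1 (ltnW st)) /= addrA lerDr; apply: addr_ge0 => //.
  by apply: sumr_ge0 => i _; exact: sqnorm_ge0.
have term : forall i, (s <= i < t)%N ->
    dotv (phi i) (x s) ^+ 2 <= 2 * rT * e i + 2 * sqnorm (phi i) * (L * Dl).
  move=> i /andP [si it].
  have -> : x s = x i + (x s - x i) by rewrite addrC subrK.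
  rewrite dotvDr -/(z i).
  set b := dotv (phi i) (x s - x i).
  have hz : z i ^+ 2 <= rT * e i.
    have -> : z i ^+ 2 = rr phi i * e i by rewrite /e; field; rewrite gt_eqF // rr_gt0.
    apply: ler_wpM2r => //; apply: rr_mono; rewrite -ltnS prednK //; exact: leq_ltn_trans it.
  have hd : sqnorm (x s - x i) <= L * Dl.
    rewrite (diff_eq hx si).
    apply: le_trans (wcs (u := fun j => (z j / rr phi j) *: phi j) s c0 e0 _ i) _.
      move=> j; rewrite sqnormZ.
      have -> : (z j / rr phi j) ^+ 2 * sqnorm (phi j) = c j * e j.
        by rewrite /c /e; field; rewrite gt_eqF // rr_gt0.
      done.
    apply: ler_pM; first (by apply: sumr_ge0); first (by apply: sumr_ge0).
      by apply: le_trans sum_c; apply: sum_sub => //; exact: ltnW.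
    by apply: le_trans sum_e; apply: sum_sub => //; exact: ltnW.
  have hb : b ^+ 2 <= sqnorm (phi i) * (L * Dl).
    apply: le_trans (CS _ _) _; apply: ler_wpM2l => //; exact: sqnorm_ge0.
  have : 0 <= (z i - b) ^+ 2 by exact: sqr_ge0.
  lra.
have hsum : \sum_(s <= i < t) dotv (phi i) (x s) ^+ 2 <= 2 * rT * Dl + 2 * (L * Dl) * rT.
  apply: le_trans (_ : \sum_(s <= i < t) (2 * rT * e i + 2 * sqnorm (phi i) * (L * Dl)) <= _).
    rewrite big_nat_cond [X in _ <= X]big_nat_cond; apply: ler_sum => i /andP [hi _].
    exact: term.
  rewrite big_split /= -!mulr_sumr -!mulr_suml.
  have LD0 : 0 <= L * Dl by apply: mulr_ge0.
  have h1 : 2 * rT * \sum_(s <= i < t) e i <= 2 * rT * Dl.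
    by apply: ler_wpM2l => //; apply: mulr_ge0 => //; exact: ltW.
  have h2 : 2 * (\sum_(s <= i < t) sqnorm (phi i)) * (L * Dl) <= 2 * rT * (L * Dl).
    by apply: ler_wpM2r => //; apply: ler_wpM2l.
  have e3 : \sum_(s <= i < t) 2 * sqnorm (phi i) = 2 * \sum_(s <= i < t) sqnorm (phi i).
    by rewrite mulr_sumr.
  rewrite e3; lra.
have rTD : rT <= D.
  have := ln_sub_le rS0 rT0.
  have h : rS / rT - 1 = (rS - rT) / rT by field; rewrite gt_eqF.
  rewrite h ler_pdivlMr // => h2.
  rewrite /D /L; lra.
have LrTD : L * rT <= D by rewrite /D mulrC lerDl ltW.
have : rT * Dl <= D * Dl by apply: ler_wpM2r.
have : L * rT * Dl <= D * Dl by apply: ler_wpM2r.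
lra.
Qed.

End Block.
Lemma t_ge1 (t : nat -> nat) : (forall k, (t k < t k.+1)%N) -> (1 <= t 0)%N -> forall k, (1 <= t k)%N.
Proof.
move=> ti t0; elim=> // k IH; apply: leq_trans IH _; exact: ltnW.
Qed.

Lemma Dblock_gt0 (R : realType) d (phi : nat -> 'cV[R]_d) (t : nat -> nat) k :
  (t k < t k.+1)%N -> 0 < Dblock phi t k.
Proof.
move=> tk; rewrite /Dblock.
have rT := rr_gt0 phi (t k.+1 - 1); have rS := rr_gt0 phi (t k - 1).
have L0 : 0 <= ln (rr phi (t k.+1 - 1)) - ln (rr phi (t k - 1)).
  rewrite subr_ge0 ler_ln ?posrE //; apply: rr_mono; rewrite leq_sub2r // ltnW //.
apply: ltr_wpDl => //; exact: mulr_ge0 (ltW rT) L0.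
Qed.

Unset Implicit Arguments.
Set Strict Implicit.

Theorem mainTheorem3 (R : realType) (d : nat) (phi : nat -> 'cV[R]_d)
  (t : nat -> nat)
  (t_incr : forall k, (t k < t k.+1)%N) (t0_ge1 : (1 <= t 0)%N) :
  (fun n => \sum_(0 <= k < n) lambda_min (Sblock phi t k) / Dblock phi t k)
      @ \oo --> +oo ->
  (fun n => Phi phi n 0) @ \oo --> (0 : 'M[R]_d).
Proof.
move=> hdiv.
set a := fun k => lambda_min (Sblock phi t k) / Dblock phi t k.
set sn := fun n => \sum_(0 <= k < n) a k.
have t1 := t_ge1 t_incr t0_ge1.
have tmono : forall m n, (m <= n)%N -> (t m <= t n)%N.
  move=> m n /subnK <-; elim: (n - m)%N => // k IH; rewrite addSn.
  apply: leq_trans IH (ltnW (t_incr _)).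
pose x (j : 'I_d) n := Phi phi n 0 *m delta_mx j (0 : 'I_1).
have hx : forall j n, x j n.+1 = (1%:M - AA phi n) *m x j n.
  by move=> j n; rewrite /x /= mulmxA.
have decay : forall j k, sqnorm (x j (t k.+1)) <= expR (- a k / 4) * sqnorm (x j (t k)).
  move=> j k.
  have hb := block (hx j) (t1 k) (t_incr k).
  have D0 := Dblock_gt0 phi (t_incr k).
  rewrite -/(Sblock phi t k) -/(Dblock phi t k) in hb.
  set V0 := sqnorm (x j (t k)) in hb *; set V1 := sqnorm (x j (t k.+1)) in hb *.
  have V00 : 0 <= V0 := sqnorm_ge0 _.
  have h1 : a k * V0 <= 4 * (V0 - V1).
    rewrite /a mulrAC ler_pdivrMr //.
    have -> : 4 * (V0 - V1) * Dblock phi t k = 4 * Dblock phi t k * (V0 - V1) by ring.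
    exact: hb.
  have h2 : 1 + (- a k / 4) <= expR (- a k / 4) := expR_ge1Dx _.
  have h3 : (1 + (- a k / 4)) * V0 <= expR (- a k / 4) * V0 by apply: ler_wpM2r.
  lra.
have decay_n : forall j n, sqnorm (x j (t n)) <= expR (- sn n / 4) * sqnorm (x j (t 0)).
  move=> j; elim=> [|n IH].
    by rewrite /sn big_geq // oppr0 mul0r expR0 mul1r.
  apply: le_trans (decay j n) _.
  have -> : - sn n.+1 / 4 = - sn n / 4 + - a n / 4.
    by rewrite /sn big_nat_recr //=; field.
  rewrite expRD [expR (- sn n / 4) * _]mulrC -mulrA; apply: ler_wpM2l; first exact: ltW (expR_gt0 _).
  done.
pose W := \sum_(j < d) sqnorm (x j (t 0)).
have W0 : 0 <= W by apply: sumr_ge0 => j _; exact: sqnorm_ge0.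
have Wj : forall j, sqnorm (x j (t 0)) <= W.
  move=> j; rewrite /W (bigD1 j) //= lerDl; apply: sumr_ge0 => i _; exact: sqnorm_ge0.
apply/cvgr0Pnorm_lt => eps eps0.
have eps20 : 0 < eps ^+ 2 by rewrite exprn_gt0.
have [N _ hN] := (cvgryPgt sn).1 hdiv (4 * (W / eps ^+ 2)).
have hm := hN N (leqnn N); rewrite /= in hm.
have small : expR (- sn N / 4) * W < eps ^+ 2.
  have e1 := expR_ge1Dx (sn N / 4).
  have Ep := expR_gt0 (sn N / 4).
  rewrite mulNr expRN mulrC ltr_pdivrMr //.
  have : W / eps ^+ 2 < sn N / 4 by lra.
  rewrite ltr_pdivrMr // => h.
  have : eps ^+ 2 * (sn N / 4) <= eps ^+ 2 * expR (sn N / 4).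
    by apply: ler_wpM2l; [exact: ltW | lra].
  nra.
exists (t N) => // n /= hn.
rewrite /Num.Def.normr /= mx_normrE; apply: bigmax_lt => // -[i j] _ /=.
have ent : Phi phi n 0 i j = x j n i 0 by rewrite /x -colE mxE.
rewrite ent.
have h1 : x j n i 0 ^+ 2 <= sqnorm (x j n) := coord_le_sqnorm _ _.
have h2 : sqnorm (x j n) <= sqnorm (x j (t N)) := V_mono (hx j) (t1 N) hn.
have h3 := decay_n j N.
have h4 : expR (- sn N / 4) * sqnorm (x j (t 0)) <= expR (- sn N / 4) * W.
  by apply: ler_wpM2l; [exact: ltW (expR_gt0 _) | exact: Wj].
have h5 : `|x j n i 0| ^+ 2 < eps ^+ 2.
  rewrite real_normK ?num_real //; lra.
by rewrite -(ltr_pXn2r (n := 2)) ?nnegrE // ltW.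
Qed.
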